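(* Let $1/2<\alpha<1$, $m\ge1$, and let $n,k$ be integers with $3\le k\le n-1$. Let $H=C_k\cup P_{n-k}$. Then $\lambda_1(A_\alpha(K_m\vee H))>\lambda_1(A_\alpha(K_m\vee P_n))$.
   Context: All graphs are finite, simple and undirected. $A_\alpha(G)=\alpha D(G)+(1-\alpha)A(G)$ with $A(G)$ the adjacency and $D(G)$ the degree matrix; $\lambda_1$ denotes the largest eigenvalue. $C_k$ is the cycle and $P_j$ the path on the indicated number of vertices, $\cup$ is disjoint union, $K_m$ the complete graph, and $\vee$ the join (disjoint union plus all edges between the two vertex sets). *)

(* Defs.v *)
From HB Require Import structures.
From mathcomp Require Import all_boot all_order all_algebra.
Set Implicit Arguments. Unset Strict Implicit. Unset Printing Implicit Defensive.
Import Order.TTheory GRing.Theory Num.Theory.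

Definition complete_g (m : nat) : rel 'I_m := fun i j => i != j.
Definition path_g (j : nat) : rel 'I_j :=
  fun a b => (a.+1 == b :> nat) || (b.+1 == a :> nat).
(* cycle C_k : i ~ i+1 mod k  (simple for k >= 3) *)
Definition cycle_g (k : nat) : rel 'I_k :=
  fun a b => (a.+1 %% k == b :> nat) || (b.+1 %% k == a :> nat).

(* disjoint union: first a vertices carry e1, last b carry e2 *)
Definition gunion a b (e1 : rel 'I_a) (e2 : rel 'I_b) : rel 'I_(a + b) :=
  fun x y => match split x, split y with
             | inl i, inl j => e1 i j
             | inr i, inr j => e2 i j
             | _, _ => false
             end.
Definition gjoin a b (e1 : rel 'I_a) (e2 : rel 'I_b) : rel 'I_(a + b) :=
  fun x y => match split x, split y with
             | inl i, inl j => e1 i j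
             | inr i, inr j => e2 i j
             | _, _ => true
             end.

Local Open Scope ring_scope.

Definition adj_mx (R : nzRingType) N (e : rel 'I_N) : 'M[R]_N :=
  \matrix_(i, j) (e i j)%:R.
Definition deg_mx (R : nzRingType) N (e : rel 'I_N) : 'M[R]_N :=
  \matrix_(i, j) ((i == j)%:R * #|[pred v | e i v]|%:R).
Definition A_alpha (R : nzRingType) N (alpha : R) (e : rel 'I_N) : 'M[R]_N :=
  alpha *: deg_mx R e + (1 - alpha) *: adj_mx R e.

Definition is_lambda1 (R : realFieldType) N (M : 'M[R]_N) (l : R) : Prop :=
  eigenvalue M l /\ forall x, eigenvalue M x -> x <= l.

Arguments complete_g m : clear implicits.
Arguments path_g j : clear implicits.
Arguments cycle_g k : clear implicits.

(* Main.v *)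
Require Import Defs.
From HB Require Import structures.
From mathcomp Require Import all_boot all_order all_algebra.
From mathcomp Require Import complex ring lra zify.
Import Order.TTheory GRing.Theory Num.Theory.
Set Implicit Arguments. Unset Strict Implicit. Unset Printing Implicit Defensive.

Definition Pn (p q : nat) : bool := (p.+1 == q) || (q.+1 == p).
Definition Ckn k p q : bool := Pn p q || ((p == 0) && (q.+1 == k)) || ((q == 0) && (p.+1 == k)).
Definition E2n m x y : bool := if x < m then (if y < m then x != y else true)
  else if y < m then true else Pn (x-m) (y-m).
Definition H1n k p q := if p < k then (if q < k then Ckn k p q else false)
  else if q < k then false else Pn (p-k) (q-k).
Definition E1n m k x y := if x < m then (if y < m then x != y else true)
  else if y < m then true else H1n k (x-m) (y-m).
Definition pin k a p := if p < a then k + p else if p < a + k then p - a else p.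
Definition tn m k a x := if x < m then x else m + pin k a (x - m).
Definition at0 (c : bool) (s t p q : nat) : bool := c && (p == s) && (q == t).

Lemma cycE k (p q : 'I_k) : cycle_g k p q = Ckn k p q.
Proof.
have md (u : nat) : (u < k)%N -> (u.+1 %% k = if u.+1 < k then u.+1 else 0)%N.
  move=> hu; case: ltnP => h; first by rewrite modn_small.
  have e : u.+1 = k by lia.
  by rewrite e modnn.
rewrite /cycle_g /Ckn /Pn !md //.
have := ltn_ord p; have := ltn_ord q.
case: (ltnP p.+1 k); case: (ltnP q.+1 k) => h1 h2 h3 h4; apply/idP/idP; lia.
Qed.

Lemma e2E m n (x y : 'I_(m+n)) : gjoin (complete_g m) (path_g n) x y = E2n m x y.
Proof.
rewrite /gjoin /E2n; case: (splitP x) => [i hx|i hx]; case: (splitP y) => [j hy|j hy] //.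
  by rewrite hx hy.
by rewrite hx hy !addKn.
Qed.

Lemma e1E m n k (x y : 'I_(m+(k+(n-k)))) :
  gjoin (complete_g m) (gunion (cycle_g k) (path_g (n-k))) x y = E1n m k x y.
Proof.
rewrite /gjoin /E1n; case: (splitP x) => [i hx|i hx]; case: (splitP y) => [j hy|j hy] //.
  by rewrite hx hy.
rewrite hx hy !addKn /gunion /H1n.
case: (splitP i) => [i' hi|i' hi]; case: (splitP j) => [j' hj|j' hj] //.
  by rewrite hi hj cycE.
by rewrite hi hj !addKn.
Qed.

Lemma E2n_sym m x y : E2n m x y = E2n m y x.
Proof.
rewrite /E2n /Pn; case: (ltnP x m); case: (ltnP y m) => // _ _.
  by rewrite eq_sym.
by rewrite orbC.
Qed.

Lemma E1n_sym m k x y : E1n m k x y = E1n m k y x.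
Proof.
rewrite /E1n /H1n /Ckn /Pn; case: (ltnP x m); case: (ltnP y m) => // _ _.
  by rewrite eq_sym.
case: (ltnP (x-m) k) => _; case: (ltnP (y-m) k) => _ //; apply/idP/idP; lia.
Qed.

Lemma tn_spec m k a x : (x < m -> tn m k a x = x) /\
  (m <= x < m + a -> tn m k a x = x + k) /\
  (m + a <= x < m + a + k -> tn m k a x = x - a) /\
  (m + a + k <= x -> tn m k a x = x).
Proof.
rewrite /tn /pin; case: ltnP => h1; first by split=> //; lia.
case: ltnP => h2; first by split; [lia|split; [lia|split; lia]].
case: ltnP => h3; first by split; [lia|split; [lia|split; lia]].
split; [lia|split; [lia|split; lia]].
Qed.

Lemma tn_lt m n k a x : (a + k <= n)%N -> (x < m + n)%N -> (tn m k a x < m + (k + (n - k)))%N.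
Proof. move=> h hx; have := tn_spec m k a x; lia. Qed.

Lemma tn_inj m n k a x y : (a + k <= n)%N -> (x < m + n)%N -> (y < m + n)%N ->
  tn m k a x = tn m k a y -> x = y.
Proof. move=> h hx hy; have := tn_spec m k a x; have := tn_spec m k a y; lia. Qed.

Ltac simpl_atoms :=
  repeat match goal with
  | |- context [?x == ?y :> nat] =>
     let E := fresh in
     first [ (have E : (x == y) = false by lia) | (have E : (x == y) = true by lia) ];
     rewrite E; clear E
  | |- context [(?x < ?y)%N] =>
     let E := fresh in
     first [ (have E : (x < y)%N = false by lia) | (have E : (x < y)%N = true by lia) ];
     rewrite E; clear E
  end.

Lemma key n k a p q : (2 < k)%N -> (k < n)%N -> (a + k <= n)%N ->
  (p < n)%N -> (q < n)%N ->
  H1n k (pin k a p) (pin k a q) =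
  (Pn p q && ~~ [|| at0 (0 < a) (a-1) a p q, at0 (0 < a) a (a-1) p q,
       at0 (a + k < n) (a+k-1) (a+k) p q | at0 (a + k < n) (a+k) (a+k-1) p q])
  || [|| at0 true a (a+k-1) p q, at0 true (a+k-1) a p q,
         at0 ((0 < a) && (a + k < n)) (a-1) (a+k) p q |
         at0 ((0 < a) && (a + k < n)) (a+k) (a-1) p q].
Proof.
move=> hk hkn hak hp hq.
rewrite /pin /H1n /Ckn /Pn /at0.
case: (ltnP p a) => h1; [|case: (ltnP p (a+k)) => h2];
case: (ltnP q a) => h3; try (case: (ltnP q (a+k)) => h4);
simpl_atoms; rewrite /= ?andbF ?orbF ?andbT ?orbT; try done; apply/idP/idP; lia.
Qed.

Lemma facts n k a p q : (2 < k)%N -> (k < n)%N -> (a + k <= n)%N ->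
  let r1 := at0 (0 < a) (a-1) a p q in let r1' := at0 (0 < a) a (a-1) p q in
  let r2 := at0 (a + k < n) (a+k-1) (a+k) p q in let r2' := at0 (a + k < n) (a+k) (a+k-1) p q in
  let a1 := at0 true a (a+k-1) p q in let a1' := at0 true (a+k-1) a p q in
  let a2 := at0 ((0 < a) && (a + k < n)) (a-1) (a+k) p q in
  let a2' := at0 ((0 < a) && (a + k < n)) (a+k) (a-1) p q in
  [/\ (r1 || r1' || r2 || r2' ==> Pn p q), (a1 || a1' || a2 || a2' ==> ~~ Pn p q),
  [&& ~~ (r1 && r1'), ~~ (r1 && r2), ~~ (r1 && r2'), ~~ (r1' && r2), ~~ (r1' && r2') & ~~ (r2 && r2')] &
  [&& ~~ (a1 && a1'), ~~ (a1 && a2), ~~ (a1 && a2'), ~~ (a1' && a2), ~~ (a1' && a2') & ~~ (a2 && a2')]].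
Proof.
move=> hk hkn hak /=; rewrite /at0 /Pn.
split.
- by apply/implyP; lia.
- by apply/implyP; lia.
- by repeat (apply/andP; split); lia.
- by repeat (apply/andP; split); lia.
Qed.

Lemma comb (e1 e2 a1 a1' a2 a2' r1 r1' r2 r2' : bool) :
  e1 = (e2 && ~~ [|| r1, r1', r2 | r2']) || [|| a1, a1', a2 | a2'] ->
  (r1 || r1' || r2 || r2' ==> e2) -> (a1 || a1' || a2 || a2' ==> ~~ e2) ->
  [&& ~~ (r1 && r1'), ~~ (r1 && r2), ~~ (r1 && r2'), ~~ (r1' && r2), ~~ (r1' && r2') & ~~ (r2 && r2')] ->
  [&& ~~ (a1 && a1'), ~~ (a1 && a2), ~~ (a1 && a2'), ~~ (a1' && a2), ~~ (a1' && a2') & ~~ (a2 && a2')] ->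
  (e1 : nat) + r1 + r1' + r2 + r2' = (e2 : nat) + a1 + a1' + a2 + a2'.
Proof.
by case: e1; case: e2; case: a1; case: a1'; case: a2; case: a2'; case: r1; case: r1'; case: r2; case: r2'.
Qed.


Local Open Scope ring_scope.

Definition Aapp (R : rcfType) N (al : R) (e : rel 'I_N) (y : 'I_N -> R) (x : 'I_N) : R :=
  \sum_v (e x v)%:R * (al * y x + (1 - al) * y v).
Definition Qf (R : rcfType) N (al : R) (e : rel 'I_N) (y : 'I_N -> R) : R :=
  \sum_x y x * Aapp al e y x.
Definition nrm (R : rcfType) N (y : 'I_N -> R) : R := \sum_x y x ^+ 2.

Lemma A_alphaE (R : rcfType) N (al : R) (e : rel 'I_N) x v :
  A_alpha al e x v = al * ((x == v)%:R * #|[pred u | e x u]|%:R) + (1 - al) * (e x v)%:R.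
Proof. by rewrite !mxE. Qed.

Lemma card_predE (R : rcfType) N (e : rel 'I_N) x :
  #|[pred u | e x u]|%:R = \sum_v (e x v)%:R :> R.
Proof.
rewrite -sum1_card natr_sum big_mkcond /=; apply: eq_bigr => v _.
by rewrite inE; case: (e x v).
Qed.

Lemma rowAE (R : rcfType) N (al : R) (e : rel 'I_N) (y : 'I_N -> R) x :
  \sum_v A_alpha al e x v * y v = Aapp al e y x.
Proof.
rewrite /Aapp.
under eq_bigr do rewrite A_alphaE mulrDl.
rewrite big_split /=.
rewrite (bigD1 x) //= big1 ?addr0; last first.
  by move=> v /negbTE hv; rewrite eq_sym hv mul0r mulr0 mul0r.
rewrite eqxx mul1r card_predE.
under [in RHS]eq_bigr do rewrite mulrDr.
rewrite big_split /=; congr (_ + _).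
  by rewrite mulr_sumr mulr_suml; apply: eq_bigr => v _; ring.
by apply: eq_bigr => v _; ring.
Qed.
Section Spec.
Variable R : rcfType.
Local Notation C := (complex R).
Local Notation toC := (real_complex R).

Lemma conj_toC (x : R) : (toC x)^* = toC x.
Proof. by apply: conj_Creal; rewrite complex_real. Qed.

Lemma T1 N (M : 'M[R]_N) : (0 < N)%N -> M^T = M ->
  exists l, eigenvalue M l /\
   forall z : 'rV[R]_N, (z *m M *m z^T) 0 0 <= l * (z *m z^T) 0 0.
Proof.
move=> hN hM.
pose A := map_mx toC M.
have Aherm : A \is hermsymmx.
  apply/is_hermitianmxP; rewrite expr0 scale1r; apply/matrixP => i j.
  by rewrite !mxE conj_toC -{1}hM mxE.
have /orthomx_spectralP Aeq := hermitian_normalmx Aherm.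
have dreal := hermitian_spectral_diag_real Aherm.
set P := spectralmx A in Aeq.
set d := spectral_diag A in Aeq dreal.
have Punit : P \is unitarymx by apply: spectral_unitarymx.
have Pu : P \in unitmx by apply: unitarymx_unit.
have PtP : (P ^t* )%sesqui *m P = 1%:M.
  by rewrite -invmx_unitary // mulVmx.
pose i0 := Ordinal hN.
pose j0 := [arg max_(j > i0) complex.Re (d 0 j)]%O.
pose l := complex.Re (d 0 j0).
have dE j : d 0 j = toC (complex.Re (d 0 j)).
  by rewrite RRe_real //; apply: (mxOverP dreal).
have lmax j : complex.Re (d 0 j) <= l.
  by rewrite /l /j0; case: arg_maxP => // i _ H; apply: H.
exists l; split.
  rewrite eigenvalue_root_char -(fmorph_root toC) map_char_poly.
  rewrite -eigenvalue_root_char; apply/eigenvalueP.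
  exists (row j0 P).
    have PA : P *m A = diag_mx d *m P.
      by rewrite {1}Aeq !mulmxA mulmxV // mul1mx.
    rewrite -row_mul -/A PA row_mul row_diag_mx -scalemxAl -rowE.
    by rewrite {1}dE.
  apply/eqP => /rowP H0.
  have := Punit; rewrite qualifE => /eqP /matrixP /(_ j0 j0).
  rewrite !mxE eqxx big1 => [/eqP|k _]; first by rewrite eq_sym oner_eq0.
  by have := H0 k; rewrite !mxE => ->; rewrite mul0r.
move=> z.
rewrite -lecR.
pose Z := map_mx toC z.
have ZT : Z^T = (Z ^t* )%sesqui.
  by apply/matrixP => i j; rewrite !mxE conj_toC.
have F1 : Z *m A *m Z^T = map_mx toC (z *m M *m z^T) by rewrite !map_mxM map_trmx.
have F2 : Z *m Z^T = map_mx toC (z *m z^T) by rewrite !map_mxM map_trmx.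
have G1 : toC ((z *m M *m z^T) 0 0) = (Z *m A *m Z^T) 0 0.
 by rewrite F1 [RHS]mxE.
have G2 : toC ((z *m z^T) 0 0) = (Z *m Z^T) 0 0 by rewrite F2 [RHS]mxE.
rewrite rmorphM /= G1 G2.
pose W := Z *m (P ^t* )%sesqui.
have WT : (W ^t* )%sesqui = P *m (Z ^t* )%sesqui.
  by rewrite /W trmx_mul map_mxM trmxCK.
have E1 : Z *m A *m Z^T = W *m diag_mx d *m (W ^t* )%sesqui.
  by rewrite [in LHS]ZT WT {1}Aeq invmx_unitary // /W !mulmxA.
have E2 : Z *m Z^T = W *m (W ^t* )%sesqui.
  by rewrite [in LHS]ZT WT /W -mulmxA (mulmxA _ P) PtP mul1mx.
rewrite E1 E2 mul_mx_diag; clearbody W.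
rewrite -subr_ge0 !mxE mulr_sumr -sumrB sumr_ge0 // => j _.
rewrite !mxE (mulrC (W 0 j) (d 0 j)) -mulrA -mulrBl mulr_ge0 //.
  by rewrite dE -rmorphB /= -[0]/(toC 0) lecR subr_ge0.
exact: mul_conjC_ge0.
Qed.
End Spec.

Definition symr N (e : rel 'I_N) := forall x v, e x v = e v x.

Lemma A_sym (R : rcfType) N (al : R) (e : rel 'I_N) : symr e ->
  (A_alpha al e)^T = A_alpha al e.
Proof.
move=> se; apply/matrixP => i j; rewrite mxE !A_alphaE se.
case: (eqVneq i j) => [->//|h]; by rewrite !mul0r.
Qed.

Lemma colE (R : rcfType) N (al : R) (e : rel 'I_N) (y : 'I_N -> R) j : symr e ->
  \sum_i y i * A_alpha al e i j = Aapp al e y j.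
Proof.
move=> se; rewrite -rowAE; apply: eq_bigr => i _.
by rewrite mulrC; move/matrixP: (A_sym al se) => /(_ j i); rewrite mxE => ->.
Qed.

Lemma quadE (R : rcfType) N (al : R) (e : rel 'I_N) (y : 'I_N -> R) : symr e ->
  ((\row_i y i) *m A_alpha al e *m (\row_i y i)^T) 0 0 = Qf al e y.
Proof.
move=> se; rewrite mxE /Qf; apply: eq_bigr => j _.
rewrite !mxE mulrC; congr (_ * _); rewrite -colE //; apply: eq_bigr => i _.
by rewrite !mxE.
Qed.

Lemma nrmE (R : rcfType) N (y : 'I_N -> R) :
  ((\row_i y i) *m (\row_i y i)^T) 0 0 = nrm y.
Proof. by rewrite mxE /nrm; apply: eq_bigr => j _; rewrite !mxE expr2. Qed.

Lemma nrm_ge0 (R : rcfType) N (y : 'I_N -> R) : 0 <= nrm y.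
Proof. by apply: sumr_ge0 => i _; apply: sqr_ge0. Qed.

Lemma nrm_gt0 (R : rcfType) N (y : 'I_N -> R) : (exists x, y x != 0) -> 0 < nrm y.
Proof.
move=> [x hx]; rewrite lt_def nrm_ge0 andbT; apply/eqP => /psumr_eq0P H.
have := H (fun i _ => sqr_ge0 (y i)) x isT.
by move/eqP; rewrite sqrf_eq0 (negbTE hx).
Qed.

Lemma Qf_eig (R : rcfType) N (al l : R) (e : rel 'I_N) (y : 'I_N -> R) :
  (forall x, Aapp al e y x = l * y x) -> Qf al e y = l * nrm y.
Proof.
move=> h; rewrite /Qf /nrm mulr_sumr; apply: eq_bigr => x _.
by rewrite h expr2 mulrCA.
Qed.

Lemma lam (R : rcfType) N (al : R) (e : rel 'I_N) : (0 < N)%N -> symr e ->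
  exists l, is_lambda1 (A_alpha al e) l /\ (forall y, Qf al e y <= l * nrm y) /\
    exists y, (exists x, y x != 0) /\ forall x, Aapp al e y x = l * y x.
Proof.
move=> hN se; have [l [hev hR]] := T1 hN (A_sym al se).
have Ray : forall y, Qf al e y <= l * nrm y.
  by move=> y; rewrite -quadE // -nrmE.
have eigv : forall x, eigenvalue (A_alpha al e) x ->
    exists y, (exists j, y j != 0) /\ forall j, Aapp al e y j = x * y j.
  move=> x /eigenvalueP [v hv vn0]; exists (fun j => v 0 j); split.
    apply/existsP; apply: contraNT vn0 => /existsPn H.
    by apply/eqP/rowP => j; rewrite mxE; move/negPn/eqP: (H j).
  move=> j; rewrite -colE //.
  by have /rowP /(_ j) := hv; rewrite !mxE => <-.
exists l; split; [split=> // x hx|split=> //].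
  have [y [ny hy]] := eigv x hx.
  have := Ray y; rewrite (Qf_eig hy) ler_pM2r //; exact: nrm_gt0.
exact: eigv.
Qed.

Lemma Aapp_lin (R : rcfType) N (al t : R) (e : rel 'I_N) (y w : 'I_N -> R) x :
  Aapp al e (fun u => y u + t * w u) x = Aapp al e y x + t * Aapp al e w x.
Proof.
by rewrite /Aapp mulr_sumr -big_split; apply: eq_bigr => v _ /=; ring.
Qed.

Lemma Aapp_bil (R : rcfType) N (al : R) (e : rel 'I_N) (y w : 'I_N -> R) :
  \sum_x y x * Aapp al e w x = \sum_x \sum_v (e x v)%:R * (al * (y x * w x))
     + \sum_x \sum_v (e x v)%:R * ((1 - al) * (y x * w v)).
Proof.
rewrite -big_split; apply: eq_bigr => x _ /=.
by rewrite /Aapp mulr_sumr -big_split; apply: eq_bigr => v _ /=; ring.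
Qed.

Lemma Aapp_sym (R : rcfType) N (al : R) (e : rel 'I_N) (y w : 'I_N -> R) : symr e ->
  \sum_x y x * Aapp al e w x = \sum_x w x * Aapp al e y x.
Proof.
move=> se; rewrite !Aapp_bil; congr (_ + _).
  by apply: eq_bigr => x _; apply: eq_bigr => v _; rewrite [y x * _]mulrC.
rewrite exchange_big; apply: eq_bigr => x _; apply: eq_bigr => v _.
by rewrite se; congr (_ * (_ * _)); rewrite mulrC.
Qed.

Lemma psd (R : rcfType) N (al l : R) (e : rel 'I_N) (y : 'I_N -> R) : symr e ->
  (forall z, Qf al e z <= l * nrm z) -> Qf al e y = l * nrm y ->
  forall x, Aapp al e y x = l * y x.
Proof.
move=> se Ray hy.
pose L z x := l * z x - Aapp al e z x.
pose F z := \sum_x z x * L z x.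
have FE z : F z = l * nrm z - Qf al e z.
  rewrite /F /Qf /nrm mulr_sumr -sumrB; apply: eq_bigr => x _.
  by rewrite /L; ring.
have F0 z : 0 <= F z by rewrite FE subr_ge0.
pose w := L y.
have Fy : F y = 0 by rewrite FE hy subrr.
pose c := F w; pose s := nrm w.
have s0 : 0 <= s := nrm_ge0 w.
have c0 : 0 <= c := F0 w.
pose t := - s / (c + 1).
have ht : t * (c + 1) = - s.
  rewrite /t mulrAC -mulrA mulfV ?mulr1 //.
  by apply: lt0r_neq0; rewrite ltr_wpDl.
pose z := fun u => y u + t * w u.
have Lz x : L z x = L y x + t * L w x.
  by rewrite /L /z Aapp_lin; ring.
have symL : \sum_x y x * L w x = \sum_x w x * L y x.
  rewrite /L; under eq_bigr do rewrite mulrBr.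
  under [RHS]eq_bigr do rewrite mulrBr.
  rewrite !sumrB Aapp_sym //; congr (_ - _).
  by apply: eq_bigr => x _; ring.
have Fz : F z = 2%:R * t * s + t ^+ 2 * c.
  rewrite /F.
  under eq_bigr do rewrite Lz /z.
  have -> : \sum_x (y x + t * w x) * (L y x + t * L w x) =
     F y + t * (\sum_x y x * L w x) + t * (\sum_x w x * L y x) + t ^+ 2 * c.
    rewrite /F /c /F !mulr_sumr -!big_split; apply: eq_bigr => x _ /=; ring.
  rewrite Fy symL.
  have -> : \sum_x w x * L y x = s by rewrite /s /nrm; apply: eq_bigr => x _; rewrite expr2.
  ring.
have := F0 z; rewrite Fz => H.
have s00 : s = 0 by nra.
move=> x.
have /psumr_eq0P H0 := s00.
have := H0 (fun i _ => sqr_ge0 (w i)) x isT.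
move/eqP; rewrite sqrf_eq0 /w /L subr_eq0 => /eqP ->; done.
Qed.

Lemma Qf2 (R : rcfType) N (al : R) (e : rel 'I_N) (y : 'I_N -> R) :
  Qf al e y = \sum_x \sum_v (e x v)%:R * (al * (y x * y x))
     + \sum_x \sum_v (e x v)%:R * ((1 - al) * (y x * y v)).
Proof. exact: Aapp_bil. Qed.

Lemma absvec (R : rcfType) N (al l : R) (e : rel 'I_N) (y : 'I_N -> R) : symr e ->
  0 <= al -> al <= 1 ->
  (forall z, Qf al e z <= l * nrm z) -> (forall x, Aapp al e y x = l * y x) ->
  forall x, Aapp al e (fun u => `|y u|) x = l * `|y x|.
Proof.
move=> se a0 a1 Ray hy.
have na : nrm (fun u => `|y u|) = nrm y.
  by apply: eq_bigr => x _; rewrite real_normK // num_real.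
apply: psd => //; apply/eqP; rewrite eq_le Ray na -(Qf_eig hy) /=.
rewrite !Qf2 lerD //; apply: ler_sum => x _; apply: ler_sum => v _.
  by rewrite -normrM ger0_norm // -expr2 sqr_ge0.
rewrite -normrM ler_wpM2l // ?ler0n // ler_wpM2l ?subr_ge0 //.
exact: ler_norm.
Qed.

Lemma zero_nb (R : rcfType) N (al l : R) (e : rel 'I_N) (y : 'I_N -> R) :
  al < 1 -> (forall u, 0 <= y u) -> (forall x, Aapp al e y x = l * y x) ->
  forall x, y x = 0 -> forall v, e x v -> y v = 0.
Proof.
move=> a1 y0 hy x yx v exv.
have := hy x; rewrite yx mulr0 /Aapp => /psumr_eq0P H.
have nn : forall u, true -> 0 <= (e x u)%:R * (al * y x + (1 - al) * y u).
  by move=> u _; rewrite yx mulr0 add0r mulr_ge0 ?ler0n // mulr_ge0 // subr_ge0 ltW.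
have := H nn v isT.
rewrite exv yx mulr0 add0r mul1r => /eqP; rewrite mulf_eq0 subr_eq0.
by case/orP => [/eqP h|/eqP //]; move: a1; rewrite h ltxx.
Qed.

Lemma pos_vec (R : rcfType) N (al l : R) (e : rel 'I_N) (y : 'I_N -> R) (w0 : 'I_N) :
  symr e -> (forall v, v != w0 -> e w0 v) ->
  al < 1 -> (forall u, 0 <= y u) -> (exists u, y u != 0) ->
  (forall x, Aapp al e y x = l * y x) -> forall x, 0 < y x.
Proof.
move=> se dom a1 y0 [u yu] hy x; rewrite lt_def y0 andbT.
apply/eqP => yx.
have yw0 : y w0 = 0.
  case: (eqVneq x w0) => [<- //|h]; apply: (zero_nb a1 y0 hy yx).
  by rewrite se dom.
move/eqP: yu; apply; case: (eqVneq u w0) => [-> //|h].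
exact: (zero_nb a1 y0 hy yw0 (dom _ h)).
Qed.

Lemma reindex_lem (R : rcfType) N N1 (al : R) (e1 : rel 'I_N1) (tau : 'I_N -> 'I_N1)
  (g : 'I_N1 -> 'I_N) (y : 'I_N -> R) :
  cancel tau g -> cancel g tau ->
  [/\ forall x, Aapp al e1 (fun i => y (g i)) (tau x) = Aapp al (fun u v => e1 (tau u) (tau v)) y x,
      Qf al e1 (fun i => y (g i)) = Qf al (fun u v => e1 (tau u) (tau v)) y &
      nrm (fun i => y (g i)) = nrm y].
Proof.
move=> c1 c2.
have bij : bijective tau by exists g.
have A x : Aapp al e1 (fun i => y (g i)) (tau x) = Aapp al (fun u v => e1 (tau u) (tau v)) y x.
  rewrite /Aapp (reindex tau (onW_bij _ bij)) /=.
  by apply: eq_bigr => v _; rewrite !c1.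
split=> //.
  rewrite /Qf (reindex tau (onW_bij _ bij)) /=.
  by apply: eq_bigr => v _; rewrite A c1.
rewrite /nrm (reindex tau (onW_bij _ bij)) /=.
by apply: eq_bigr => v _; rewrite c1.
Qed.



Definition alist (R : rcfType) (o n k a : nat) : seq (R * bool * nat * nat) :=
 [:: (1, true, (o+a)%N, (o+(a+k-1))%N); (1, true, (o+(a+k-1))%N, (o+a)%N);
     (1, (0<a)%N && (a+k<n)%N, (o+(a-1))%N, (o+(a+k))%N);
     (1, (0<a)%N && (a+k<n)%N, (o+(a+k))%N, (o+(a-1))%N);
     (-1, (0<a)%N, (o+(a-1))%N, (o+a)%N); (-1, (0<a)%N, (o+a)%N, (o+(a-1))%N);
     (-1, (a+k<n)%N, (o+(a+k-1))%N, (o+(a+k))%N); (-1, (a+k<n)%N, (o+(a+k))%N, (o+(a+k-1))%N)].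

Definition dsum (R : rcfType) (L : seq (R * bool * nat * nat)) (x y : nat) : R :=
  \sum_(q <- L) q.1.1.1 * (at0 q.1.1.2 q.1.2 q.2 x y)%:R.

Lemma keyR (R : rcfType) n k a p q : (2 < k)%N -> (k < n)%N -> (a + k <= n)%N ->
  (p < n)%N -> (q < n)%N ->
  (H1n k (pin k a p) (pin k a q))%:R - (Pn p q)%:R = dsum (alist R 0 n k a) p q :> R.
Proof.
move=> hk hkn hak hp hq.
have [f1 f2 f3 f4] := facts p q hk hkn hak.
have := comb (key hk hkn hak hp hq) f1 f2 f3 f4 => /(congr1 (fun u => u%:R : R)).
rewrite !natrD /dsum !big_cons big_nil /= !add0n => H.
set b := (H1n k _ _)%:R in H *; lra.
Qed.

Lemma at0_shift (c : bool) m s t x y : (m <= x)%N -> (m <= y)%N ->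
  at0 c (m + s) (m + t) x y = at0 c (0 + s) (0 + t) (x - m) (y - m).
Proof.
move=> hx hy; rewrite /at0 !add0n.
by congr (_ && _ && _); apply/eqP/eqP; lia.
Qed.

Lemma fullR (R : rcfType) m n k a x y : (2 < k)%N -> (k < n)%N -> (a + k <= n)%N ->
  (x < m + n)%N -> (y < m + n)%N ->
  (E1n m k (tn m k a x) (tn m k a y))%:R - (E2n m x y)%:R = dsum (alist R m n k a) x y :> R.
Proof.
move=> hk hkn hak hx hy.
have [sx1 [sx2 [sx3 sx4]]] := tn_spec m k a x.
have [sy1 [sy2 [sy3 sy4]]] := tn_spec m k a y.
case: (ltnP x m) => hxm.
  have zx : forall s, (x == m + s) = false by move=> s; lia.
  rewrite /dsum !big_cons big_nil /= /at0 !zx !andbF !mulr0 !addr0.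
  rewrite /E1n /E2n sx1 // hxm.
  case: (ltnP y m) => hym; first by rewrite sy1 // hym subrr.
  by rewrite ifF ?subrr //; lia.
case: (ltnP y m) => hym.
  have zy : forall s, (y == m + s) = false by move=> s; lia.
  rewrite /dsum !big_cons big_nil /= /at0 !zy !andbF !mulr0 !addr0.
  rewrite /E1n /E2n sy1 // hym.
  have h1 : (tn m k a x < m)%N = false by lia.
  have h2 : (x < m)%N = false by lia.
  by rewrite h1 h2 subrr.
have -> : dsum (alist R m n k a) x y = dsum (alist R 0 n k a) (x - m) (y - m).
  have hxs : forall s, (x == m + s)%N = (x - m == 0 + s)%N by move=> s; apply/eqP/eqP; lia.
  have hys : forall s, (y == m + s)%N = (y - m == 0 + s)%N by move=> s; apply/eqP/eqP; lia.
  by rewrite /dsum !big_cons !big_nil /= /at0 !hxs !hys !add0n.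
rewrite -keyR //; try lia.
have tx : tn m k a x = (m + pin k a (x - m))%N by rewrite /tn ifF //; lia.
have ty : tn m k a y = (m + pin k a (y - m))%N by rewrite /tn ifF //; lia.
have h1 : (tn m k a x < m)%N = false by lia.
have h2 : (tn m k a y < m)%N = false by lia.
have h3 : (x < m)%N = false by lia.
have h4 : (y < m)%N = false by lia.
by rewrite /E1n /E2n h1 h2 h3 h4 tx ty !addKn.
Qed.

Definition yn (R : rcfType) N (y : 'I_N -> R) (i : nat) : R :=
  if (insub i : option 'I_N) is Some o then y o else 0.

Lemma ynE (R : rcfType) N (y : 'I_N -> R) (x : 'I_N) : yn y x = y x.
Proof. by rewrite /yn valK. Qed.

Lemma sum_at0 (R : rcfType) N (c : bool) (s t x : nat) (H : nat -> R) :
  (c -> t < N)%N ->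
  \sum_(v < N) (at0 c s t x v)%:R * H v = (c && (x == s))%:R * H t.
Proof.
rewrite /at0 => ht; case: c ht => /= [ht|_]; last first.
  by rewrite mul0r big1 // => v _; rewrite mul0r.
case: (x == s); last by rewrite mul0r big1 // => v _; rewrite mul0r.
have ht' : (t < N)%N by apply: ht.
rewrite (bigD1 (Ordinal ht')) //= eqxx big1 ?addr0 // => v hv.
suff -> : (v == t :> nat) = false by rewrite mul0r.
by apply/negbTE; apply: contra hv => /eqP h; apply/eqP/val_inj.
Qed.

Lemma sum_c (R : rcfType) N (c : bool) (s : nat) (G : nat -> R) :
  (c -> s < N)%N ->
  \sum_(x < N) (c && (x == s :> nat))%:R * G x = c%:R * G s.
Proof.
move=> hs; case: c hs => /= [hs|_]; last by rewrite mul0r big1 // => v _; rewrite mul0r.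
have hs' : (s < N)%N by apply: hs.
rewrite (bigD1 (Ordinal hs')) //= eqxx big1 ?addr0 // => v hv.
suff -> : (v == s :> nat) = false by rewrite mul0r.
by apply/negbTE; apply: contra hv => /eqP h; apply/eqP/val_inj.
Qed.

Definition Lok (R : rcfType) N (L : seq (R * bool * nat * nat)) :=
  all (fun q => q.1.1.2 ==> (q.1.2 < N)%N && (q.2 < N)%N) L.

Lemma rowL (R : rcfType) N (L : seq (R * bool * nat * nat)) (x : nat) (H : nat -> R) :
  Lok N L ->
  \sum_(v < N) dsum L x v * H v =
  \sum_(q <- L) q.1.1.1 * ((q.1.1.2 && (x == q.1.2))%:R * H q.2).
Proof.
move=> /allP hL; rewrite /dsum.
under eq_bigr do rewrite mulr_suml.
rewrite exchange_big /=; apply: eq_big_seq => q hq.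
rewrite -(@sum_at0 R N); last by move=> hc; have := hL q hq; rewrite hc /= => /andP [].

by rewrite mulr_sumr; apply: eq_bigr => v _; rewrite mulrA.
Qed.

Lemma colL (R : rcfType) N (L : seq (R * bool * nat * nat)) (G : nat -> nat -> R) :
  Lok N L ->
  \sum_(x < N) \sum_(q <- L) q.1.1.1 * ((q.1.1.2 && (x == q.1.2 :> nat))%:R * G x q.2) =
  \sum_(q <- L) q.1.1.1 * (q.1.1.2%:R * G q.1.2 q.2).
Proof.
move=> /allP hL; rewrite exchange_big /=; apply: eq_big_seq => q hq.
rewrite -mulr_sumr; congr (_ * _).
by apply: (@sum_c R N _ _ (fun x => G x q.2)) => hc; have := hL q hq; rewrite hc /= => /andP [].
Qed.

Lemma alist_ok (R : rcfType) m n k a : (2 < k)%N -> (k < n)%N -> (a + k <= n)%N ->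
  Lok (m + n) (alist R m n k a).
Proof.
move=> hk hkn hak; rewrite /Lok /alist /=.
repeat (apply/andP; split); apply/implyP; lia.
Qed.

Lemma diffs (R : rcfType) m n k a (al : R) (y : 'I_(m+n) -> R) :
  (2 < k)%N -> (k < n)%N -> (a + k <= n)%N ->
  (forall x, Aapp al (fun u v : 'I_(m+n) => E1n m k (tn m k a u) (tn m k a v)) y x
       - Aapp al (fun u v : 'I_(m+n) => E2n m u v) y x =
   \sum_(q <- alist R m n k a) q.1.1.1 *
      ((q.1.1.2 && (x == q.1.2 :> nat))%:R * (al * yn y x + (1 - al) * yn y q.2)))
  /\ Qf al (fun u v : 'I_(m+n) => E1n m k (tn m k a u) (tn m k a v)) y
      - Qf al (fun u v : 'I_(m+n) => E2n m u v) y =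
   \sum_(q <- alist R m n k a) q.1.1.1 *
      (q.1.1.2%:R * (yn y q.1.2 * (al * yn y q.1.2 + (1 - al) * yn y q.2))).
Proof.
move=> hk hkn hak.
have ok := alist_ok R m hk hkn hak.
have row : forall x : 'I_(m+n),
  Aapp al (fun u v : 'I_(m+n) => E1n m k (tn m k a u) (tn m k a v)) y x
       - Aapp al (fun u v : 'I_(m+n) => E2n m u v) y x =
   \sum_(q <- alist R m n k a) q.1.1.1 *
      ((q.1.1.2 && (x == q.1.2 :> nat))%:R * (al * yn y x + (1 - al) * yn y q.2)).
  move=> x; rewrite /Aapp -sumrB -(@rowL R (m+n) _ _ (fun v => al * yn y x + (1 - al) * yn y v)) //.
  apply: eq_bigr => v _; rewrite -mulrBl (@fullR R m n k a) //.
  by rewrite !ynE.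
split=> //.
rewrite /Qf -sumrB -(@colL R (m+n) _ (fun x t => yn y x * (al * yn y x + (1 - al) * yn y t))) //.
apply: eq_bigr => x _; rewrite -mulrBr row mulr_sumr; apply: eq_bigr => q _.
rewrite ynE; ring.
Qed.

Definition QDs (R : rcfType) m n k a (al : R) (Y : nat -> R) :=
  \sum_(q <- alist R m n k a) q.1.1.1 *
      (q.1.1.2%:R * (Y q.1.2 * (al * Y q.1.2 + (1 - al) * Y q.2))).
Definition RDs (R : rcfType) m n k a (al : R) (Y : nat -> R) (x : nat) :=
  \sum_(q <- alist R m n k a) q.1.1.1 *
      ((q.1.1.2 && (x == q.1.2 :> nat))%:R * (al * Y x + (1 - al) * Y q.2)).

Lemma caseA (R : rcfType) m n k (al : R) (Y : nat -> R) :
  (2 < k)%N -> (k < n)%N -> 0 < al -> al < 1 -> (forall i, (i < m + n)%N -> 0 < Y i) ->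
  Y (m + (0 + k))%N - Y (m + 0)%N <= 0 ->
  0 <= QDs m n k 0 al Y /\ RDs m n k 0 al Y m != 0.
Proof.
move=> hk hkn a0 a1 Yp hf.
rewrite /QDs /RDs /alist !big_cons big_nil /=.
simpl_atoms; rewrite /= ?addn0; rewrite addn0 in hf.
have p0 := Yp m ltac:(lia).
have pb := Yp (m + (0 + k - 1))%N ltac:(lia).
have pk := Yp (m + (0 + k))%N ltac:(lia).
move: hf p0 pb pk.
set y0 := Y m; set yb := Y (m + (0 + k - 1))%N; set yk := Y (m + (0 + k))%N => hf p0 pb pk.
have h1 : 0 <= al * ((y0 - yk) * (y0 + yk)).
  by apply: mulr_ge0; [lra| apply: mulr_ge0; lra].
have h2 : 0 <= (1 - al) * (yb * (y0 - yk)).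
  by apply: mulr_ge0; [lra| apply: mulr_ge0; lra].
have T1r : (true%:R : R) = 1 by [].
rewrite !T1r !mul0r !mulr0 !addr0 !mul1r.
split.
  apply: (le_trans (y := al * ((y0 - yk) * (y0 + yk)) + 2%:R * ((1 - al) * (yb * (y0 - yk))))).
    by rewrite addr_ge0 // mulr_ge0.
  by rewrite le_eqVlt; apply/orP; left; apply/eqP; ring.
rewrite big_nil !add0r addr0; apply: lt0r_neq0.
have := mulr_gt0 a0 p0; have : 0 < (1 - al) * yb by apply: mulr_gt0 => //; lra.
lra.
Qed.

Lemma caseB (R : rcfType) m n k (al : R) (Y : nat -> R) :
  (2 < k)%N -> (k < n)%N -> 0 < al -> al < 1 -> (forall i, (i < m + n)%N -> 0 < Y i) ->
  0 <= Y (m + (n - k + k - 1))%N - Y (m + (n - k - 1))%N ->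
  0 <= QDs m n k (n - k) al Y /\ RDs m n k (n - k) al Y (m + (n - k + k - 1)) != 0.
Proof.
move=> hk hkn a0 a1 Yp hf.
rewrite /QDs /RDs /alist !big_cons big_nil /=.
simpl_atoms; rewrite /=.
have pA := Yp (m + (n - k))%N ltac:(lia).
have pB := Yp (m + (n - k + k - 1))%N ltac:(lia).
have pP := Yp (m + (n - k - 1))%N ltac:(lia).
move: hf pA pB pP.
set yA := Y (m + (n - k))%N; set yB := Y (m + (n - k + k - 1))%N; set yP := Y (m + (n - k - 1))%N.
move=> hf pA pB pP.
have T1r : (true%:R : R) = 1 by [].
rewrite !T1r !mul0r !mulr0 !addr0 !mul1r.
have h1 : 0 <= al * ((yB - yP) * (yB + yP)).
  by apply: mulr_ge0; [lra| apply: mulr_ge0; lra].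
have h2 : 0 <= (1 - al) * (yA * (yB - yP)).
  by apply: mulr_ge0; [lra| apply: mulr_ge0; lra].
split.
  apply: (le_trans (y := al * ((yB - yP) * (yB + yP)) + 2%:R * ((1 - al) * (yA * (yB - yP))))).
    by rewrite addr_ge0 // mulr_ge0.
  by rewrite le_eqVlt; apply/orP; left; apply/eqP; ring.
rewrite !big_nil; apply: lt0r_neq0.
have := mulr_gt0 a0 pB; have : 0 < (1 - al) * yA by apply: mulr_gt0 => //; lra.
lra.
Qed.

Lemma caseC (R : rcfType) m n k a (al : R) (Y : nat -> R) :
  (2 < k)%N -> (k < n)%N -> (0 < a)%N -> (a + k < n)%N ->
  0 < al -> al < 1 -> (forall i, (i < m + n)%N -> 0 < Y i) ->
  0 < Y (m + (a + k - 1))%N - Y (m + (a - 1))%N ->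
  Y (m + (a + k))%N - Y (m + a)%N <= 0 ->
  0 <= QDs m n k a al Y /\ RDs m n k a al Y (m + a) != 0.
Proof.
move=> hk hkn ha hak a0 a1 Yp hf1 hf2.
rewrite /QDs /RDs /alist !big_cons big_nil /=.
simpl_atoms; rewrite /=.
have pA := Yp (m + a)%N ltac:(lia).
have pB := Yp (m + (a + k - 1))%N ltac:(lia).
have pP := Yp (m + (a - 1))%N ltac:(lia).
have pQ := Yp (m + (a + k))%N ltac:(lia).
move: hf1 hf2 pA pB pP pQ.
set yA := Y (m + a)%N; set yB := Y (m + (a + k - 1))%N; set yP := Y (m + (a - 1))%N;
set yQ := Y (m + (a + k))%N.
move=> hf1 hf2 pA pB pP pQ.
have T1r : (true%:R : R) = 1 by [].
rewrite !T1r !mul0r !mulr0 !addr0 !mul1r.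
have h2 : 0 <= (1 - al) * ((yB - yP) * (yA - yQ)).
  by apply: mulr_ge0; [lra| apply: mulr_ge0; lra].
split.
  apply: (le_trans (y := 2%:R * ((1 - al) * ((yB - yP) * (yA - yQ))))).
    by rewrite mulr_ge0.
  by rewrite le_eqVlt; apply/orP; left; apply/eqP; ring.
rewrite !big_nil; apply: lt0r_neq0.
have : 0 < (1 - al) * (yB - yP) by apply: mulr_gt0 => //; lra.
lra.
Qed.

Lemma pick_a (R : rcfType) m n k (al : R) (Y : nat -> R) :
  (2 < k)%N -> (k < n)%N -> 0 < al -> al < 1 -> (forall i, (i < m + n)%N -> 0 < Y i) ->
  exists a, [/\ (a + k <= n)%N, 0 <= QDs m n k a al Y &
     exists x0, (x0 < m + n)%N /\ RDs m n k a al Y x0 != 0].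
Proof.
move=> hk hkn a0 a1 Yp.
pose f i := Y (m + (i + k))%N - Y (m + i)%N.
case: (lerP (f 0%N) 0) => hf0.
  have [h1 h2] := caseA hk hkn a0 a1 Yp hf0.
  by exists 0%N; split=> //; [lia| exists m; split=> //; lia].
pose L0 := (n - 1 - k)%N.
case: (lerP 0 (f L0)) => hfL.
  have hB : 0 <= Y (m + (n - k + k - 1))%N - Y (m + (n - k - 1))%N.
    have -> : (n - k + k - 1 = L0 + k)%N by rewrite /L0; lia.
    have -> : (n - k - 1 = L0)%N by rewrite /L0; lia.
    exact: hfL.
  have [h1 h2] := caseB hk hkn a0 a1 Yp hB.
  by exists (n - k)%N; split=> //; [lia| exists (m + (n - k + k - 1))%N; split=> //; lia].
have exP : exists i, (i <= L0)%N && (f i <= 0) by exists L0; rewrite leqnn /= ltW.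
have [a /andP [haL hfa] amin] := ex_minnP exP.
have a_pos : (0 < a)%N.
  case: a haL hfa amin => //= _ hfa _; move: hf0; rewrite ltNge hfa //.
have hfa1 : 0 < f (a - 1)%N.
  rewrite ltNge; apply/negP => h.
  have := amin (a - 1)%N; rewrite h andbT => /(_ ltac:(lia)); lia.
have hC1 : 0 < Y (m + (a + k - 1))%N - Y (m + (a - 1))%N.
  by have -> : (a + k - 1 = a - 1 + k)%N by lia.
have [h1 h2] := caseC hk hkn a_pos ltac:(rewrite /L0 in haL; lia) a0 a1 Yp hC1 hfa.
by exists a; split=> //; [lia| exists (m + a)%N; split=> //; rewrite /L0 in haL; lia].
Qed.

Lemma Aapp_ext (R : rcfType) N (al : R) (e e' : rel 'I_N) (y : 'I_N -> R) x :
  (forall u v, e u v = e' u v) -> Aapp al e y x = Aapp al e' y x.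
Proof. by move=> h; rewrite /Aapp; apply: eq_bigr => v _; rewrite h. Qed.

Lemma Qf_ext (R : rcfType) N (al : R) (e e' : rel 'I_N) (y : 'I_N -> R) :
  (forall u v, e u v = e' u v) -> Qf al e y = Qf al e' y.
Proof. by move=> h; rewrite /Qf; apply: eq_bigr => x _; rewrite (Aapp_ext _ _ _ h). Qed.

Unset Implicit Arguments.

Theorem mainTheorem18 (R : rcfType) (alpha : R) (m n k : nat) :
  1 / 2 < alpha -> alpha < 1 -> (1 <= m)%N -> (3 <= k)%N -> (k <= n - 1)%N ->
  exists l1 l2 : R,
    is_lambda1
      (A_alpha alpha (gjoin (complete_g m) (gunion (cycle_g k) (path_g (n - k))))) l1
    /\ is_lambda1 (A_alpha alpha (gjoin (complete_g m) (path_g n))) l2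
    /\ l2 < l1.
Proof.
move=> ha1 ha2 hm hk hkn.
have a0 : 0 < alpha by lra.
have hk' : (2 < k)%N by lia.
have hkn' : (k < n)%N by lia.
set e2 := gjoin (complete_g m) (path_g n).
set e1 := gjoin (complete_g m) (gunion (cycle_g k) (path_g (n - k))).
have se2 : symr e2 by move=> x v; rewrite /e2 !e2E E2n_sym.
have se1 : symr e1 by move=> x v; rewrite /e1 !e1E E1n_sym.
have hN2 : (0 < m + n)%N by lia.
have hN1 : (0 < m + (k + (n - k)))%N by lia.
have [l2 [il2 [Ray2 [y0 [ny0 hy0]]]]] := lam alpha hN2 se2.
have [l1 [il1 [Ray1 _]]] := lam alpha hN1 se1.
pose y := fun u => `|y0 u|.
have hy : forall x, Aapp alpha e2 y x = l2 * y x.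
  exact: (absvec se2 (ltW a0) (ltW ha2) Ray2 hy0).
pose w0 : 'I_(m + n) := Ordinal hN2.
have dom : forall v, v != w0 -> e2 w0 v.
  move=> v hv; rewrite /e2 e2E /E2n /= ifT; last by lia.
  case: ifP => // _; apply: contra hv => /eqP h; apply/eqP/val_inj => /=.
  by rewrite -h.
have ny : exists u, y u != 0.
  by case: ny0 => u hu; exists u; rewrite /y normr_eq0.
have ypos : forall x, 0 < y x.
  exact: (pos_vec se2 dom ha2 (fun u => normr_ge0 (y0 u)) ny hy).
pose Y := yn y.
have Yp : forall i, (i < m + n)%N -> 0 < Y i.
  by move=> i hi; have := ynE y (Ordinal hi); rewrite /Y /= => ->.
have [a [hak hQD [x0 [hx0 hRD]]]] := pick_a hk' hkn' a0 ha2 Yp.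
have ht : forall x, (x < m + n)%N -> (tn m k a x < m + (k + (n - k)))%N.
  by move=> x hx; apply: tn_lt.
pose tau (x : 'I_(m + n)) : 'I_(m + (k + (n - k))) := Ordinal (ht x (ltn_ord x)).
have tau_inj : injective tau.
  move=> u v /(congr1 val) /= h; apply/val_inj => /=.
  exact: (tn_inj hak (ltn_ord u) (ltn_ord v) h).
have tau_bij : bijective tau.
  by apply: inj_card_bij => //; rewrite !card_ord; lia.
have [g c1 c2] := tau_bij.
have [Ar Qr Nr] := reindex_lem alpha e1 y c1 c2.
have e1'E : forall u v, e1 (tau u) (tau v) = E1n m k (tn m k a u) (tn m k a v).
  by move=> u v; rewrite /e1 e1E.
have e2E' : forall u v, e2 u v = E2n m u v by move=> u v; rewrite /e2 e2E.
have [Drow DQ] := @diffs R m n k a alpha y hk' hkn' hak.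
have Q2 : Qf alpha e2 y = l2 * nrm y := Qf_eig hy.
have Q1 : Qf alpha e1 (fun i => y (g i)) = l2 * nrm y + QDs m n k a alpha Y.
  rewrite Qr (Qf_ext _ _ e1'E) -Q2 (Qf_ext _ y e2E').
  by rewrite /QDs /Y -DQ addrC subrK.
have Ny : 0 < nrm y by apply: nrm_gt0.
have R1 := Ray1 (fun i => y (g i)); rewrite Q1 Nr in R1.
have l21 : l2 <= l1.
  by rewrite -(ler_pM2r Ny); apply: le_trans R1; rewrite lerDl.
exists l1, l2; split=> //; split=> //.
rewrite lt_def l21 andbT; apply/eqP => l12.
have Qeq : Qf alpha e1 (fun i => y (g i)) = l1 * nrm (fun i => y (g i)).
  apply/eqP; rewrite eq_le Ray1 Q1 Nr -l12 lerDl hQD //.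
have E1 := psd se1 Ray1 Qeq (tau (Ordinal hx0)).
rewrite Ar c1 in E1.
have D := Drow (Ordinal hx0).
have RD0 : RDs m n k a alpha Y x0 = 0.
  rewrite /RDs /Y -[x0]/(val (Ordinal hx0)) -D.
  by rewrite -(Aapp_ext _ _ _ e1'E) E1 -(Aapp_ext _ _ _ e2E') hy -l12 subrr.
by move: hRD; rewrite RD0 eqxx.
Qed.
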